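(* Let $(X_k)_{k\ge 1}$ be nonnegative random variables with partial sums $S_0=0$, $S_k=X_1+\dots+X_k$, and let $T$ be a nonnegative DFR random variable, independent of $(X_k)_{k\ge1}$, with survival function $\overline F_T(t)=P(T>t)$. Fix a natural number $n\ge 1$ and assume there exists an $N_n$-distributional version $\{(Z^{\mathbf x}_{n+1},Z^{\mathbf x}_{n+2}):\mathbf x\in N_n\}$ of $(X_{n+1},X_{n+2})$ given $(X_1,\dots,X_n)$ such that, for every DFR survival function $\overline H$ on $[0,\infty)$ with $\overline H(0)=1$ and every $\mathbf x\in N_n$, $$\big(E[\overline H(Z^{\mathbf x}_{n+1})]\big)^2\le E[\overline H(Z^{\mathbf x}_{n+1}+Z^{\mathbf x}_{n+2})].$$ Then $$\big(E[\overline F_T(S_{n+1})]\big)^2\le E[\overline F_T(S_n)]\,E[\overline F_T(S_{n+2})].$$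
   Context: A survival function $\overline G$ (of a nonnegative random variable) is DFR (decreasing failure rate) if for every $z\ge 0$ the map $t\mapsto \overline G(z+t)/\overline G(t)$ is increasing (on $\{t:\overline G(t)>0\}$); a random variable is DFR if its survival function is. Regular conditional distributions: let $F_n$ be the law of $(X_1,\dots,X_n)$ and let $N_n\subseteq\mathbb R_+^n$ be a Borel set with $P((X_1,\dots,X_n)\in N_n)=1$. A family $\{\mu^{\mathbf x}:\mathbf x\in N_n\}$ of probability measures on $\mathbb R_+^m$, such that $\mathbf x\mapsto\mu^{\mathbf x}(B)$ is measurable for every Borel $B\subseteq\mathbb R_+^m$, is an $N_n$ regular conditional distribution of $(X_{n+1},\dots,X_{n+m})$ given $(X_1,\dots,X_n)$ if for all Borel $A\subseteq N_n$ and $B\subseteq\mathbb R_+^m$, $P((X_1,\dots,X_n)\in A,(X_{n+1},\dots,X_{n+m})\in B)=\int_A\mu^{\mathbf x}(B)\,dF_n(\mathbf x)$. An $N_n$-distributional version of $(X_{n+1},\dots,X_{n+m})$ given $(X_1,\dots,X_n)$ is a family of random vectors $\{(Z^{\mathbf x}_{n+1},\dots,Z^{\mathbf x}_{n+m}):\mathbf x\in N_n\}$ (not necessarily on a common probability space) such that $(Z^{\mathbf x}_{n+1},\dots,Z^{\mathbf x}_{n+m})$ has law $\mu^{\mathbf x}$ for each $\mathbf x$, where $\{\mu^{\mathbf x}\}$ is such a regular conditional distribution. *)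

(* Defs.v *)
From HB Require Import structures.
From mathcomp Require Import all_boot all_order all_algebra.
From mathcomp Require Import all_classical all_reals all_analysis.
From mathcomp Require Import measurable_realfun.
Set Implicit Arguments. Unset Strict Implicit. Unset Printing Implicit Defensive.
Import Order.TTheory GRing.Theory Num.Theory.
Local Open Scope classical_set_scope.
Local Open Scope ring_scope.

Definition survival (R : realType) (d : measure_display) (Omega : measurableType d)
  (P : probability Omega R) (Y : Omega -> R) (t : R) : R :=
  fine (P [set w | t < Y w]).

Definition is_survival_function (R : realType) (G : R -> R) : Prop :=
  exists nu : probability R R,
    nu `[0, +oo[%classic = 1%E /\ forall t, 0 <= t -> G t = fine (nu `]t, +oo[%classic).

Definition DFR (R : realType) (G : R -> R) : Prop :=
  forall z s t : R, 0 <= z -> 0 <= s -> s <= t -> 0 < G s -> 0 < G t ->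
    G (z + s) / G s <= G (z + t) / G t.

(* (X_1, ..., X_n) as an n-tuple (X k is X_k; X 0 is unused). *)
Definition Xtuple (R : realType) (d : measure_display) (Omega : measurableType d)
  (X : nat -> Omega -> R) (n : nat) (w : Omega) : n.-tuple R :=
  [tuple X i.+1 w | i < n].

Definition psum (R : realType) (d : measure_display) (Omega : measurableType d)
  (X : nat -> Omega -> R) (k : nat) (w : Omega) : R :=
  \sum_(1 <= i < k.+1) X i w.

Definition nonneg_tuple (R : realType) (n : nat) : set (n.-tuple R) :=
  [set x | forall i : 'I_n, 0 <= tnth x i].
Definition nonneg_pair (R : realType) : set (R * R) :=
  [set z | 0 <= z.1 /\ 0 <= z.2].

(* Independence of the random variable T and the sequence (X_k)_{k>=1}:
   T is independent of every finite-dimensional vector (X_1, ..., X_m). *)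
Definition indep_rv_seq (R : realType) (d : measure_display) (Omega : measurableType d)
  (P : probability Omega R) (T : Omega -> R) (X : nat -> Omega -> R) : Prop :=
  forall (m : nat) (B : set R) (A : set (m.-tuple R)),
    measurable B -> measurable A ->
    P (T @^-1` B `&` Xtuple X m @^-1` A) =
    (P (T @^-1` B) * P (Xtuple X m @^-1` A))%E.

(* Main.v *)
Require Import Defs.
From HB Require Import structures.
From mathcomp Require Import all_boot all_order all_algebra.
From mathcomp Require Import all_classical all_reals all_analysis.
From mathcomp Require Import measurable_realfun.
From mathcomp Require Import ring lra.
Import Order.TTheory GRing.Theory Num.Theory.
Local Open Scope classical_set_scope.
Local Open Scope ring_scope.
Section gen.
Context (R : realType).

Lemma real_cs (A B C : R) : 0 <= A -> 0 <= B -> 0 <= C ->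
  (forall l : R, 0 < l -> 2 * A <= l * B + l^-1 * C) -> A * A <= B * C.
Proof.
move=> A0 B0 C0 key.
have [A00|Apos] := eqVneq A 0.
  by rewrite A00 mul0r mulr_ge0.
have Agt0 : 0 < A by rewrite lt_neqAle eq_sym Apos A0.
have [B00|Bpos] := eqVneq B 0.
  have C1 : 0 < C + 1 by rewrite ltr_wpDl.
  have := key ((C + 1) / A) (divr_gt0 C1 Agt0).
  rewrite B00 mulr0 add0r invf_div.
  set q := A / (C + 1).
  have q0 : 0 <= q by rewrite divr_ge0// ltW.
  have qE : q * (C + 1) = A by rewrite /q divfK// gt_eqF.
  move=> h; exfalso; nra.
have Bgt0 : 0 < B by rewrite lt_neqAle eq_sym Bpos B0.
have := key (A / B) (divr_gt0 Agt0 Bgt0).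
rewrite divfK ?gt_eqF// invf_div.
set t := B / A.
have tE : t * A = B by rewrite /t divfK// gt_eqF.
move=> h; nra.
Qed.

Lemma int01 d (T : measurableType d) (mu : probability T R) (D : set T)
  (mD : measurable D) (f : T -> R) : measurable_fun D f ->
  (forall x, D x -> 0 <= f x <= 1) ->
  exists2 r : R, (\int[mu]_(x in D) (f x)%:E = r%:E)%E & 0 <= r <= 1.
Proof.
move=> mf f01.
have i0 : (0 <= \int[mu]_(x in D) (f x)%:E)%E.
  by apply: integral_ge0 => x Dx; rewrite lee_fin; case/andP: (f01 x Dx).
have i1 : (\int[mu]_(x in D) (f x)%:E <= 1)%E.
  have h1 : (\int[mu]_(x in D) (f x)%:E <= \int[mu]_(x in D) (cst 1%E) x)%E.
    apply: ge0_le_integral => //.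
    - by move=> x Dx; rewrite lee_fin; case/andP: (f01 x Dx).
    - exact/measurable_EFinP.
    - by move=> x Dx; rewrite lee_fin; case/andP: (f01 x Dx).
  apply: le_trans h1 _.
  by rewrite integral_cst// mul1e probability_le1.
have fin : (\int[mu]_(x in D) (f x)%:E)%E \is a fin_num.
  by rewrite ge0_fin_numE// (le_lt_trans i1)// ltey.
exists (fine (\int[mu]_(x in D) (f x)%:E)%E); first by rewrite fineK.
by rewrite -lee_fin fineK// i0 -lee_fin fineK.
Qed.


Lemma int_restr d (T : measurableType d) (mu : probability T R) (S : set T)
  (mS : measurable S) (f : T -> \bar R) : mu S = 1%E ->
  measurable_fun setT f -> (forall x, (0 <= f x)%E) ->
  (\int[mu]_x f x = \int[mu]_(x in S) f x)%E.
Proof.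
move=> muS mf f0.
rewrite (@ge0_negligible_integral _ _ _ mu setT (~` S)) ?setTD ?setCK//.
- exact: measurableC.
- by move: (probability_setC mu mS); rewrite muS subee.
Qed.

Lemma cs_ineq d (T : measurableType d) (mu : probability T R) (D : set T)
  (mD : measurable D) (a b c : T -> R) :
  measurable_fun D a -> measurable_fun D b -> measurable_fun D c ->
  (forall x, D x -> 0 <= a x <= 1) -> (forall x, D x -> 0 <= b x <= 1) ->
  (forall x, D x -> 0 <= c x <= 1) ->
  (forall x, D x -> a x * a x <= b x * c x) ->
  (\int[mu]_(x in D) (a x)%:E * \int[mu]_(x in D) (a x)%:E <=
   \int[mu]_(x in D) (b x)%:E * \int[mu]_(x in D) (c x)%:E)%E.
Proof.
move=> ma mb mc a01 b01 c01 abc.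
have [A eA /andP[A0 A1]] := @int01 _ _ mu _ mD _ ma a01.
have [B eB /andP[B0 B1]] := @int01 _ _ mu _ mD _ mb b01.
have [C eC /andP[C0 C1]] := @int01 _ _ mu _ mD _ mc c01.
rewrite eA eB eC -!EFinM lee_fin.
apply: real_cs => // l l0.
have h : (\int[mu]_(x in D) ((2 * a x)%:E) <=
          \int[mu]_(x in D) ((l * b x)%:E + (l^-1 * c x)%:E))%E.
  apply: ge0_le_integral => //.
  - by move=> x Dx; rewrite lee_fin; case/andP: (a01 x Dx) => ? _; rewrite mulr_ge0.
  - by apply/measurable_EFinP; apply: measurable_funM.
  - apply: emeasurable_funD; apply/measurable_EFinP; exact: measurable_funM.
  - move=> x Dx; rewrite -EFinD lee_fin.
    case/andP: (a01 x Dx) => ax0 _; case/andP: (b01 x Dx) => bx0 _.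
    case/andP: (c01 x Dx) => cx0 _.
    have := abc x Dx.
    have uv : (l * b x) * (l^-1 * c x) = b x * c x.
      by rewrite mulrACA mulfV ?gt_eqF// mul1r.
    have u0 : 0 <= l * b x by rewrite mulr_ge0// ltW.
    have v0 : 0 <= l^-1 * c x by rewrite mulr_ge0// invr_ge0 ltW.
    move: uv u0 v0; set u := l * b x; set v := l^-1 * c x => uv u0 v0 hx.
    rewrite -uv in hx.
    have sq : 0 <= (u - v) * (u - v) by rewrite -expr2 sqr_ge0.
    have s2 : (2 * a x) * (2 * a x) <= (u + v) * (u + v) by nra.
    have : 0 <= u + v + 2 * a x by nra.
    nra.
move: h.
rewrite ge0_integralD//.
2: by move=> x Dx; case/andP: (b01 x Dx) => bx0 _; rewrite lee_fin mulr_ge0// ltW.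
2: by apply/measurable_EFinP; apply: measurable_funM.
2: by move=> x Dx; case/andP: (c01 x Dx) => cx0 _; rewrite lee_fin mulr_ge0// invr_ge0 ltW.
2: by apply/measurable_EFinP; apply: measurable_funM.
have iZ (k : R) (f : T -> R) : 0 <= k -> measurable_fun D f ->
    (forall x, D x -> 0 <= f x) ->
    (\int[mu]_(x in D) (k * f x)%:E = k%:E * \int[mu]_(x in D) (f x)%:E)%E.
  move=> k0 mf f0; under eq_integral do rewrite EFinM.
  by rewrite ge0_integralZl//; first exact/measurable_EFinP.
rewrite !iZ//.
1: by rewrite eA eB eC -!EFinM -EFinD lee_fin.
all: first [ by move=> x Dx; case/andP: (a01 x Dx)
           | by move=> x Dx; case/andP: (b01 x Dx)
           | by move=> x Dx; case/andP: (c01 x Dx)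
           | by rewrite invr_ge0 ltW
           | by rewrite ltW ].
Qed.

End gen.
Arguments int01 {R d T} mu {D} mD {f}.
Arguments int_restr {R d T mu S} mS {f}.
Arguments cs_ineq {R d T} mu {D} mD {a b c}.
Section disint.
Local Open Scope ereal_scope.
Context (R : realType) (d : measure_display) (Om : measurableType d)
  (P : probability Om R) (n : nat) (Fn : probability (n.-tuple R) R)
  (N : set (n.-tuple R)) (mN : measurable N)
  (mu : n.-tuple R -> probability (R * R)%type R)
  (hmu : forall B, measurable B -> measurable_fun N (fun x => mu x B)).

Definition mu' (x : n.-tuple R) : {measure set (R * R) -> \bar R} :=
  if x \in N then (mu x : {measure set (R*R) -> \bar R}) else mzero.

Let mu'_meas U : measurable U -> measurable_fun setT (mu' ^~ U).
Proof.
move=> mU; rewrite (_ : mu' ^~ U = (fun x => mu x U) \_ N).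
  by apply/(measurable_restrictT _ mN); exact: hmu.
by apply/funext => x; rewrite /mu' patchE; case: ifP.
Qed.

HB.instance Definition _ := isKernel.Build _ _ _ _ R mu' mu'_meas.

Let mu'_uub : measure_fam_uub mu'.
Proof.
exists 2%R => x; rewrite /mu'; case: ifP => _ /=.
  by rewrite probability_setT lte_fin ltr1n.
by rewrite /mzero lte_fin.
Qed.

HB.instance Definition _ := Kernel_isFinite.Build _ _ _ _ R mu' mu'_uub.

Definition lF (_ : unit) : {measure set (n.-tuple R) -> \bar R} := Fn.

Let lF_meas U : measurable U -> measurable_fun setT (lF ^~ U).
Proof. by move=> mU; exact: measurable_cst. Qed.

HB.instance Definition _ := isKernel.Build _ _ _ _ R lF lF_meas.

Let lF_uub : measure_fam_uub lF.
Proof. by exists 2%R => x; rewrite (_ : lF x setT = 1) ?lte_fin ?ltr1n//; exact: probability_setT. Qed.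

HB.instance Definition _ := Kernel_isFinite.Build _ _ _ _ R lF lF_uub.

Let mpair (x : n.-tuple R) : measurable_fun setT (pair x : R * R -> n.-tuple R * (R * R)).
Proof. exact: measurable_fun_pair. Qed.

Definition kk (ux : unit * n.-tuple R) : {measure set (n.-tuple R * (R * R)) -> \bar R}.
Proof. refine (pushforward (mu' ux.2) (pair ux.2)). exact: mpair. Defined.


Lemma kkE ux U : kk ux U = mu' ux.2 (xsection U ux.2).
Proof. by rewrite xsectionE. Qed.

Let kk_meas U : measurable U -> measurable_fun setT (kk ^~ U).
Proof.
move=> mU; rewrite (_ : kk ^~ U = (fun x => mu' x (xsection U x)) \o snd).
  apply: measurableT_comp => //.
  by apply: measurable_fun_xsection_finite_kernel; rewrite inE.
by apply/funext => ux; rewrite kkE.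
Qed.

HB.instance Definition _ := isKernel.Build _ _ _ _ R kk kk_meas.

Let kk_uub : measure_fam_uub kk.
Proof.
exists 2%R => ux; rewrite kkE; rewrite /mu'; case: ifP => _ /=.
  by rewrite (le_lt_trans (probability_le1 _ _)) ?lte_fin ?ltr1n//; exact: measurable_xsection.
by rewrite /mzero lte_fin.
Qed.

HB.instance Definition _ := Kernel_isFinite.Build _ _ _ _ R kk kk_uub.

Lemma integral_lk (f : n.-tuple R * (R * R) -> \bar R) :
  (forall z, 0 <= f z) -> measurable_fun setT f ->
  \int[mkcomp lF kk tt]_z f z = \int[Fn]_(x in N) \int[mu x]_z f (x, z).
Proof.
move=> f0 mf; rewrite integral_kcomp//.
transitivity (\int[Fn]_y \int[kk (tt, y)]_z f z); first by [].
rewrite [RHS]integral_mkcond; apply: eq_integral => x _.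
rewrite patchE; case: ifPn => xN.
  rewrite ge0_integral_pushforward//=.
  by rewrite /mu' xN.
rewrite ge0_integral_pushforward//=.
rewrite /mu' (negbTE xN); exact: integral_measure_zero.
Qed.

Lemma meas_int (f : n.-tuple R * (R * R) -> \bar R) :
  (forall z, 0 <= f z) -> measurable_fun setT f ->
  measurable_fun N (fun x => \int[mu x]_z f (x, z)).
Proof.
move=> f0 mf.
have := measurable_fun_integral_finite_kernel f mu' f0 mf.
move=> /(measurable_funS measurableT (subsetT N)).
apply: eq_measurable_fun => x xN.
change (\int[mu' x]_y f (x, y) = \int[mu x]_z f (x, z)).
by unfold mu'; cbv beta; rewrite xN.
Qed.

Lemma prob_restr d0 (T0 : measurableType d0) (Q : probability T0 R) (S B : set T0) :
  measurable S -> measurable B -> Q S = 1 -> Q B = Q (B `&` S).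
Proof.
move=> mS mB QS; rewrite (measureDI Q mB mS).
rewrite [X in (X + _)%E](_ : _ = 0) ?add0e//.
apply/eqP; rewrite eq_le measure_ge0 andbT.
rewrite (@le_trans _ _ (Q (~` S)))//.
  apply: le_measure; rewrite ?inE//.
    exact: measurableD.
  exact: measurableC.
by rewrite probability_setC// QS subee.
Qed.

Lemma measurable_nonneg_pair : measurable (@nonneg_pair R).
Proof.
rewrite (_ : @nonneg_pair R = `[0%R, +oo[%classic `*` `[0%R, +oo[%classic).
  by apply: measurableX.
by apply/seteqP; split => z /=; rewrite !in_itv/= !andbT.
Qed.

Context (Y : Om -> n.-tuple R) (V : Om -> (R * R)%type)
  (mY : measurable_fun setT Y) (mV : measurable_fun setT V)
  (hN : P (Y @^-1` N) = 1) (hV : forall w, (@nonneg_pair R) (V w))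
  (hmuN : forall x, N x -> mu x (@nonneg_pair R) = 1)
  (hjoint : forall A B, measurable A -> A `<=` N ->
                      measurable B -> B `<=` @nonneg_pair R ->
            P (Y @^-1` A `&` V @^-1` B) = \int[Fn]_(x in A) mu x B).

Let mJ : measurable_fun setT (fun w => (Y w, V w)).
Proof. exact: measurable_fun_pair. Qed.

Definition law : {measure set (n.-tuple R * (R * R)) -> \bar R}.
Proof. refine (pushforward P (fun w => (Y w, V w))). exact: mJ. Defined.

Lemma lawE E : law E = P ((fun w => (Y w, V w)) @^-1` E).
Proof. by []. Qed.

Let mpre (A : set (n.-tuple R)) : measurable A -> measurable (Y @^-1` A).
Proof. by move=> mA; rewrite -[X in measurable X]setTI; exact: mY. Qed.

Let mpreV (A : set (R * R)) : measurable A -> measurable (V @^-1` A).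
Proof. by move=> mA; rewrite -[X in measurable X]setTI; exact: mV. Qed.

Lemma law_rect A B : measurable A -> measurable B ->
  law (A `*` B) = mkcomp lF kk tt (A `*` B).
Proof.
move=> mA mB.
rewrite lawE (_ : _ @^-1` _ = Y @^-1` A `&` V @^-1` B); last by [].
rewrite (@prob_restr _ _ P _ _ (mpre _ mN)); [|exact: measurableI (mpre _ mA) (mpreV _ mB)|exact: hN].
rewrite (_ : _ `&` _ = Y @^-1` (A `&` N) `&` V @^-1` (B `&` (@nonneg_pair R))); last first.
  apply/seteqP; split => w /=.
    by move=> [[Aw Bw] Nw]; split; split => //; exact: hV.
  by move=> [[Aw Nw] [Bw _]].
rewrite hjoint//; last 2 first.
    exact: measurableI.
  exact: measurableI measurable_nonneg_pair.
transitivity (\int[Fn]_x (\int[kk (tt, x)]_z (\1_(A `*` B) z)%:E)); last first.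
  symmetry; transitivity (\int[Fn]_x kk (tt,x) (A `*` B)); first by [].
  apply: eq_integral => x _; rewrite integral_indic ?setIT//; exact: measurableX.
rewrite integral_mkcond; apply: eq_integral => x _.
rewrite integral_indic ?setIT//; last exact: measurableX.
rewrite kkE /= patchE; case: ifPn => xAN.
  have [xA xN] : A x /\ N x by move: xAN; rewrite inE.
  rewrite in_xsectionX ?inE// /mu' ifT ?inE//.
  by rewrite -(@prob_restr _ _ (mu x) _ _ measurable_nonneg_pair mB (hmuN _ xN)).
have [xA|xA] := boolP (x \in A).
  rewrite in_xsectionX// /mu' ifF//; apply/negbTE; apply: contra xAN.
  by rewrite !inE => xN; split => //; move: xA; rewrite inE.
by rewrite notin_xsectionX// measure0.
Qed.

Lemma law_eq E : measurable E -> law E = mkcomp lF kk tt E.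
Proof.
move=> mE.
apply: (measure_unique [set A `*` B | A in measurable & B in measurable] (fun=> setT)) => //.
- exact: measurable_prod_measurableType.
- move=> _ _ [X1 mX1 [X2 mX2 <-]] [Y1 mY1 [Y2 mY2 <-]].
  exists (X1 `&` Y1); first exact: measurableI.
  by exists (X2 `&` Y2); [exact: measurableI|rewrite setXI].
- by move=> _; exists setT => //; exists setT => //; rewrite setXTT.
- by rewrite bigcup_const.
- by move=> _ [A mA [B mB <-]]; exact: law_rect.
- by move=> _; rewrite lawE probability_setT ltry.
Qed.

Lemma disint (f : n.-tuple R * (R * R) -> \bar R) :
  (forall z, 0 <= f z) -> measurable_fun setT f ->
  \int[P]_w f (Y w, V w) = \int[Fn]_(x in N) \int[mu x]_z f (x, z).
Proof.
move=> f0 mf; rewrite -integral_lk//.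
transitivity (\int[law]_z f z).
  by rewrite ge0_integral_pushforward//=.
by apply: (eq_measure_integral (mkcomp lF kk tt)) => E mE _; exact: law_eq.
Qed.

End disint.
Section surv.
Context (R : realType) (d : measure_display) (Om : measurableType d)
  (P : probability Om R) (T : Om -> R) (mT : measurable_fun setT T).

Local Notation G := (survival P T).

Let mset t : measurable [set w | t < T w].
Proof.
rewrite (_ : [set w | t < T w] = T @^-1` `]t, +oo[); last first.
  by apply/seteqP; split => w /=; rewrite in_itv/= andbT.
by rewrite -[X in measurable X]setTI; exact: mT.
Qed.

Lemma GE t : (G t)%:E = P [set w | t < T w].
Proof. by rewrite /survival fineK// fin_num_measure. Qed.

Lemma G_ge0 t : 0 <= G t.
Proof. by rewrite -lee_fin GE. Qed.

Lemma G_le1 t : G t <= 1.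
Proof. by rewrite -lee_fin GE probability_le1. Qed.

Lemma G_noninc s t : s <= t -> G t <= G s.
Proof.
move=> st; rewrite -lee_fin !GE; apply: le_measure; rewrite ?inE//.
by move=> w /= /(le_lt_trans st).
Qed.

Lemma G_meas : measurable_fun setT G.
Proof.
apply: nonincreasing_measurable => //.
by move=> x y xy; exact: G_noninc.
Qed.


Definition mS (s : R) : {measure set R -> \bar R}.
Proof.
refine (pushforward (mrestr P (mset s)) (fun w => T w - s)).
exact: measurable_funB.
Defined.

Lemma mSE s U : mS s U = P ((fun w => T w - s) @^-1` U `&` [set w | s < T w]).
Proof. by []. Qed.

Lemma H_surv s : 0 < G s -> is_survival_function (fun t => G (s + t) / G s).
Proof.
move=> Gs0.
have mST : mS s setT = (G s)%:E by rewrite mSE preimage_setT setTI GE.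
pose nu : probability R R := mnormalize (mS s) \d_(0:R).
have nuE U : nu U = (mS s U * ((G s)^-1)%:E)%E.
  transitivity (mnormalize (mS s) \d_(0:R) U); first by [].
  rewrite /mnormalize mST /=; case: ifPn => [|_].
    by rewrite eqe (gt_eqF Gs0).
  by [].
exists nu; split.
  rewrite nuE mSE.
  rewrite (_ : _ `&` _ = [set w | s < T w]); last first.
    apply/seteqP; split => w /=; first by case.
    by move=> sT; split => //; rewrite in_itv/= andbT subr_ge0 ltW.
  by rewrite -GE -EFinM divff// gt_eqF.
move=> t t0; rewrite nuE mSE.
rewrite (_ : _ `&` _ = [set w | s + t < T w]); last first.
  apply/seteqP; split => w /=.
    by rewrite in_itv/= andbT ltrBrDl => -[].
  move=> stT; rewrite in_itv/= andbT ltrBrDl; split => //.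
  by apply: le_lt_trans stT; rewrite lerDl.
by rewrite -GE -EFinM.
Qed.


Lemma H_DFR s : 0 <= s -> 0 < G s -> DFR G -> DFR (fun t => G (s + t) / G s).
Proof.
move=> s0 Gs0 hG z a b z0 a0 ab Ha Hb.
have Gsa : 0 < G (s + a) by have := mulr_gt0 Ha Gs0; rewrite divfK ?gt_eqF.
have Gsb : 0 < G (s + b) by have := mulr_gt0 Hb Gs0; rewrite divfK ?gt_eqF.
rewrite !invf_div !mulrA !divfK ?gt_eqF//.
have sab : s + a <= s + b by rewrite lerD2l.
have := hG z (s + a) (s + b) z0 (addr_ge0 s0 a0) sab Gsa Gsb.
by rewrite [z + (s + a)]addrCA [z + (s + b)]addrCA.
Qed.

Lemma pw (mu : probability (R * R)%type R) s :
  mu (@nonneg_pair R) = 1%E -> 0 <= s -> DFR G ->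
  (forall H : R -> R, is_survival_function H -> DFR H -> H 0 = 1 ->
     ((\int[mu]_z (H z.1)%:E) * (\int[mu]_z (H z.1)%:E) <=
      \int[mu]_z (H (z.1 + z.2))%:E)%E) ->
  ((\int[mu]_z (G (s + z.1))%:E) * (\int[mu]_z (G (s + z.1))%:E) <=
   (G s)%:E * \int[mu]_z (G (s + z.1 + z.2))%:E)%E.
Proof.
move=> hnn s0 hG hH.
have m1 : measurable_fun setT (fun z : R * R => G (s + z.1)).
  apply: measurableT_comp; first exact: G_meas.
  by apply: measurable_funD => //; exact: measurable_fst.
have m2 : measurable_fun setT (fun z : R * R => G (s + z.1 + z.2)).
  apply: measurableT_comp; first exact: G_meas.
  apply: measurable_funD; last exact: measurable_snd.
  by apply: measurable_funD => //; exact: measurable_fst.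
have g01 (f : R * R -> R) : (forall z, f z = G (s + z.1) \/ f z = G (s + z.1 + z.2)) ->
    forall z, [set: R * R] z -> 0 <= f z <= 1.
  by move=> hf z _; case: (hf z) => ->; rewrite G_ge0 G_le1.
have [A eA /andP[A0 A1]] := int01 mu measurableT m1 (g01 _ (fun z => or_introl erefl)).
have [C eC /andP[C0 C1]] := int01 mu measurableT m2 (g01 _ (fun z => or_intror erefl)).
rewrite eA eC.
have [Gs0|Gsn0] := eqVneq (G s) 0.
  suff -> : A = 0 by rewrite mul0e Gs0 mul0e.
  apply/eqP; rewrite eq_le A0 andbT -lee_fin -eA.
  rewrite (int_restr (measurable_nonneg_pair R))//.
  2: by apply/measurable_EFinP.
  2: by move=> z; rewrite lee_fin G_ge0.
  apply: (@le_trans _ _ (\int[mu]_(z in @nonneg_pair R) (cst (G s)%:E) z)%E).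
    apply: ge0_le_integral => //.
    - exact: (measurable_nonneg_pair R).
    - by move=> z _; rewrite lee_fin G_ge0.
    - exact/measurable_EFinP/measurable_funTS.
    - by move=> z [z1 _]; rewrite lee_fin G_noninc// lerDl.
  rewrite integral_cst; last exact: (measurable_nonneg_pair R).
  by rewrite (_ : (G s)%:E = 0%E) ?mul0e// Gs0.
have Gs0 : 0 < G s by rewrite lt_neqAle eq_sym Gsn0 G_ge0.
pose H t := G (s + t) / G s.
have := hH H (H_surv s Gs0) (H_DFR s s0 Gs0 hG).
rewrite /H addr0 divff ?gt_eqF// => /(_ erefl).
have iZ (f : R * R -> R) : measurable_fun setT f -> (forall z, 0 <= f z) ->
    (\int[mu]_z (f z / G s)%:E = ((G s)^-1)%:E * \int[mu]_z (f z)%:E)%E.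
  move=> mf f0; under eq_integral do rewrite mulrC EFinM.
  rewrite ge0_integralZl//; first exact/measurable_EFinP.
    by move=> z _; rewrite lee_fin.
  by rewrite lee_fin invr_ge0 G_ge0.
rewrite iZ//; last by move=> z; exact: G_ge0.
under [X in (_ <= X)%E -> _]eq_integral do rewrite addrA.
rewrite iZ//; last by move=> z; exact: G_ge0.
rewrite eA eC -!EFinM !lee_fin => h.
have h2 := ler_wpM2l (mulr_ge0 (ltW Gs0) (ltW Gs0)) h.
have gn : G s != 0 by rewrite gt_eqF.
have e1 : G s * G s * ((G s)^-1 * A * ((G s)^-1 * A)) = A * A.
  by field.
have e2 : G s * G s * ((G s)^-1 * C) = G s * C.
  by field.
by rewrite e1 e2 in h2.
Qed.

End surv.
Theorem proposition3p1 (R : realType) (d : measure_display)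
  (Omega : measurableType d) (P : probability Omega R)
  (X : nat -> Omega -> R) (T : Omega -> R) (n : nat)
  (Fn : probability (n.-tuple R) R) :
  (forall k, (1 <= k)%N -> measurable_fun setT (X k)) ->
  (forall k w, (1 <= k)%N -> 0 <= X k w) ->
  measurable_fun setT T -> (forall w, 0 <= T w) ->
  DFR (survival P T) ->
  indep_rv_seq P T X ->
  (1 <= n)%N ->
  (* Fn is the law of (X_1, ..., X_n) *)
  (forall A, measurable A -> Fn A = P (Xtuple X n @^-1` A)) ->
  (* an N_n-distributional version of (X_{n+1}, X_{n+2}) given (X_1..X_n),
     described through its family of laws mu^x, with the hypothesis *)
  (exists (N : set (n.-tuple R)) (mu : n.-tuple R -> probability (R * R)%type R),
     [/\ measurable N /\ N `<=` @nonneg_tuple R n,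
         P (Xtuple X n @^-1` N) = 1%E,
         (forall x, N x -> mu x (@nonneg_pair R) = 1%E) /\
         (forall B, measurable B -> measurable_fun N (fun x : n.-tuple R => (mu x B : \bar R))),
         (forall A B, measurable A -> A `<=` N ->
                      measurable B -> B `<=` @nonneg_pair R ->
            P (Xtuple X n @^-1` A `&`
               (fun w => (X n.+1 w, X n.+2 w)) @^-1` B) =
            (\int[Fn]_(x in A) mu x B)%E) &
         (forall H : R -> R, is_survival_function H -> DFR H -> H 0 = 1 ->
          forall x, N x ->
            ((\int[mu x]_z (H z.1)%:E) * (\int[mu x]_z (H z.1)%:E) <=
             \int[mu x]_z (H (z.1 + z.2))%:E)%E)]) ->
  ((\int[P]_w (survival P T (psum X n.+1 w))%:E) *
   (\int[P]_w (survival P T (psum X n.+1 w))%:E) <=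
   (\int[P]_w (survival P T (psum X n w))%:E) *
   (\int[P]_w (survival P T (psum X n.+2 w))%:E))%E.
Proof.
move=> hXm hX0 hTm hT0 hDFR _ hn hFn [N [mu [[mN NN] hN [hmuN hmu] hjoint hH]]].
pose Y := Xtuple X n.
pose V := fun w => (X n.+1 w, X n.+2 w).
have mY : measurable_fun setT Y.
  apply/measurable_fun_tnthP => i.
  rewrite (_ : _ \o _ = X i.+1); first exact: hXm.
  by apply/funext => w; rewrite /= /Y /Xtuple tnth_mktuple.
have mV : measurable_fun setT V by apply: measurable_fun_pair; exact: hXm.
have hV : forall w, nonneg_pair (V w) by move=> w; split; exact: hX0.
pose sumt (x : n.-tuple R) := \sum_(i < n) tnth x i.
have msumt : measurable_fun setT sumt.
  by apply: measurable_sum => i; exact: measurable_tnth.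
have ps0 w : psum X n w = sumt (Y w).
  rewrite /psum big_add1 /= big_mkord; apply: eq_bigr => i _.
  by rewrite /Y /Xtuple tnth_mktuple.
have ps1 w : psum X n.+1 w = sumt (Y w) + X n.+1 w.
  by rewrite /psum big_nat_recr//= -ps0.
have ps2 w : psum X n.+2 w = sumt (Y w) + X n.+1 w + X n.+2 w.
  by rewrite /psum big_nat_recr//= -/(psum X n.+1 w) ps1.
pose G := survival P T.
have mG : measurable_fun setT G := @G_meas _ _ _ P T hTm.
have G01 t : 0 <= G t <= 1 by rewrite (@G_ge0 _ _ _ P T hTm) (@G_le1 _ _ _ P T hTm).
have DI := @disint _ _ _ P _ Fn N mN mu hmu Y V mY mV hN hV hmuN hjoint.
pose f0 := fun xz : n.-tuple R * (R * R) => (G (sumt xz.1))%:E.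
pose f1 := fun xz : n.-tuple R * (R * R) => (G (sumt xz.1 + xz.2.1))%:E.
pose f2 := fun xz : n.-tuple R * (R * R) => (G (sumt xz.1 + xz.2.1 + xz.2.2))%:E.
have mf0 : measurable_fun setT f0.
  apply/measurable_EFinP; apply: measurableT_comp => //.
  exact: measurableT_comp msumt measurable_fst.
have mf1 : measurable_fun setT f1.
  apply/measurable_EFinP; apply: measurableT_comp => //.
  apply: measurable_funD; first exact: measurableT_comp msumt measurable_fst.
  exact: measurableT_comp measurable_fst measurable_snd.
have mf2 : measurable_fun setT f2.
  apply/measurable_EFinP; apply: measurableT_comp => //.
  apply: measurable_funD; last exact: measurableT_comp measurable_snd measurable_snd.
  apply: measurable_funD; first exact: measurableT_comp msumt measurable_fst.
  exact: measurableT_comp measurable_fst measurable_snd.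
have f0p z : (0 <= f0 z)%E by rewrite lee_fin; case/andP: (G01 (sumt z.1)).
have f1p z : (0 <= f1 z)%E by rewrite lee_fin; case/andP: (G01 (sumt z.1 + z.2.1)).
have f2p z : (0 <= f2 z)%E by rewrite lee_fin; case/andP: (G01 (sumt z.1 + z.2.1 + z.2.2)).
have E0 : (\int[P]_w (G (psum X n w))%:E =
           \int[Fn]_(x in N) \int[mu x]_z f0 (x, z))%E.
  rewrite -DI//; apply: eq_integral => w _; by rewrite ps0.
have E1 : (\int[P]_w (G (psum X n.+1 w))%:E =
           \int[Fn]_(x in N) \int[mu x]_z f1 (x, z))%E.
  rewrite -DI//; apply: eq_integral => w _; by rewrite ps1.
have E2 : (\int[P]_w (G (psum X n.+2 w))%:E =
           \int[Fn]_(x in N) \int[mu x]_z f2 (x, z))%E.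
  rewrite -DI//; apply: eq_integral => w _; by rewrite ps2.
rewrite -/G E0 E1 E2.
pose a x := fine (\int[mu x]_z (G (sumt x + z.1))%:E)%E.
pose c x := fine (\int[mu x]_z (G (sumt x + z.1 + z.2))%:E)%E.
have fin1 x : (\int[mu x]_z (G (sumt x + z.1))%:E = (a x)%:E)%E /\ 0 <= a x <= 1.
  have mg : measurable_fun setT (fun z : R * R => G (sumt x + z.1)).
    apply: measurableT_comp => //.
    by apply: measurable_funD => //; exact: measurable_fst.
  have [r er r01] := int01 (mu x) measurableT mg (fun z _ => G01 _).
  by rewrite /a er.
have fin2 x : (\int[mu x]_z (G (sumt x + z.1 + z.2))%:E = (c x)%:E)%E /\ 0 <= c x <= 1.
  have mg : measurable_fun setT (fun z : R * R => G (sumt x + z.1 + z.2)).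
    apply: measurableT_comp => //.
    apply: measurable_funD; last exact: measurable_snd.
    by apply: measurable_funD => //; exact: measurable_fst.
  have [r er r01] := int01 (mu x) measurableT mg (fun z _ => G01 _).
  by rewrite /c er.
have I0 : (\int[Fn]_(x in N) \int[mu x]_z f0 (x, z) =
           \int[Fn]_(x in N) (G (sumt x))%:E)%E.
  apply: eq_integral => x _.
  transitivity (\int[mu x]_z (cst (G (sumt x))%:E) z)%E; first by [].
  rewrite integral_cst//.
  by rewrite [X in (_ * X)%E](_ : _ = 1%E) ?mule1//; exact: probability_setT.
have I1 : (\int[Fn]_(x in N) \int[mu x]_z f1 (x, z) =
           \int[Fn]_(x in N) (a x)%:E)%E.
  by apply: eq_integral => x _; exact: (fin1 x).1.
have I2 : (\int[Fn]_(x in N) \int[mu x]_z f2 (x, z) =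
           \int[Fn]_(x in N) (c x)%:E)%E.
  by apply: eq_integral => x _; exact: (fin2 x).1.
rewrite I0 I1 I2.
apply: (cs_ineq Fn mN).
- apply: measurableT_comp (fine_measurable measurableT) _.
  exact: (@meas_int _ _ N mN mu hmu f1 f1p mf1).
- exact: measurable_funTS (measurableT_comp mG msumt).
- apply: measurableT_comp (fine_measurable measurableT) _.
  exact: (@meas_int _ _ N mN mu hmu f2 f2p mf2).
- by move=> x _; exact: (fin1 x).2.
- by move=> x _; exact: G01.
- by move=> x _; exact: (fin2 x).2.
move=> x xN.
have s0 : 0 <= sumt x by apply: sumr_ge0 => i _; exact: NN x xN i.
have := @pw _ _ _ P T hTm (mu x) (sumt x) (hmuN x xN) s0 hDFR
  (fun H h1 h2 h3 => hH H h1 h2 h3 x xN).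
by rewrite (fin1 x).1 (fin2 x).1 -!EFinM lee_fin.
Qed.
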